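(* Let $T_1=(Q_1,\Sigma,\Delta,R_1,q_1^0)$ and $T_2=(Q_2,\Delta,\Omega,R_2,q_2^0)$ be top-down tree transducers, let $\hat{T}_1$ be the product construction of $T_1$ and the domain automaton of $T_2$, and let $M$ be the look-ahead transducer constructed from $T_1$ and $T_2$ as described in the context. Then $\mathcal{R}(\hat{T}_1)\circ\mathcal{R}(T_2)\subseteq\mathcal{R}(M)$.
   Context: A top-down tree transducer $T=(Q,\Sigma,\Delta,R,q_0)$ has finite state set $Q$, ranked input/output alphabets $\Sigma,\Delta$, initial state $q_0$, and finite rule set $R$ of rules $q(a(x_1,\dots,x_k))\to t$ with $a\in\Sigma_k$ ($\Sigma_k$ = symbols of rank $k$) and $t$ a tree over $\Delta$ whose leaves may additionally be of the form $q'(x_i)$, $q'\in Q$, $i\in[k]$; rules are used as rewrite rules in the usual way. $\mathcal{R}(T)$ is the set of pairs $(s,t)$ with $t$ a tree over $\Delta$ derivable from $q_0(s)$; $\mathcal{R}_1\circ\mathcal{R}_2=\{(s,u)\mid\exists t:(s,t)\in\mathcal{R}_1,(t,u)\in\mathcal{R}_2\}$. For $q\in Q$, $a\in\Sigma_k$, $\text{rhs}_T(q,a)$ is the set of right-hand sides of rules with left-hand side $q(a(x_1,\dots,x_k))$; for a right-hand side $\xi$ (resp. a set $\Gamma$ of right-hand sides), $\xi[x_i]$ (resp. $\Gamma[x_i]$) is the set of states $q'$ such that $q'(x_i)$ occurs in $\xi$ (resp. in some tree of $\Gamma$). Domain automaton of $T$: the top-down tree automaton (transducer over $\Sigma$ with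 rules of the form $p(a(x_1,\dots,x_k))\to a(p_1(x_1),\dots,p_k(x_k))$) with states all subsets of $Q$, initial state $\{q_0\}$, rules $S(a(x_1,\dots,x_k))\to a(S_1(x_1),\dots,S_k(x_k))$ for every $a\in\Sigma_k$, nonempty $S=\{q_1,\dots,q_n\}\subseteq Q$ and nonempty $\Gamma_j\subseteq\text{rhs}_T(q_j,a)$ ($j\in[n]$), where $S_i=\bigcup_j\Gamma_j[x_i]$, and rules $\emptyset(a(x_1,\dots,x_k))\to a(\emptyset(x_1),\dots,\emptyset(x_k))$ for all $a$; for an automaton state $l$, $\text{dom}(l)$ is the set of trees accepted from $l$. Product construction of transducers $T=(Q,\Sigma,\Delta,R,q_0)$ and $T'=(Q',\Delta,\Omega,R',q'_0)$: the transducer with states $Q\times Q'$, initial state $(q_0,q'_0)$, and, for every rule $q(a(x_1,\dots,x_k))\to\xi$ of $T$, every $p\in Q'$ and every tree $\zeta$ derivable from $p(\xi)$ using rules of $T'$ in which the leaves of $\xi$ of the form $q''(x_i)$ are treated as unrewritable symbols and a state $p'$ applied to such a leaf stays as $p'(q''(x_i))$, the rule $(q,p)(a(x_1,\dots,x_k))\to\zeta'$ (said to be obtained from the rule $q(a(x_1,\dots,x_k))\to\xi$ by translating $\xi$ with $p$), where $\zeta'$ replaces each $p'(q''(x_i))$ by $(q'',p')(x_i)$. A top-down tree transducer with look-ahead is a tuple $(Q,\Sigma,\Delta,R,q_0,B)$ where $B$ is a top-down tree automaton over $\Sigma$ with state set $L$ and rules have the form $q(a(x_1\!:\!l_1,\dots,x_k\!:\!l_k))\to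 t$ with $l_i\in L$; on input $s$, each node $v$ with label $a\in\Sigma_k$ is first relabeled by $\langle a,l_1,\dots,l_k\rangle$ where $l_i\in L$ are such that the $i$-th subtree of $v$ is in $\text{dom}(l_i)$, and the relabeled tree is then processed reading each rule as $q(\langle a,l_1,\dots,l_k\rangle(x_1,\dots,x_k))\to t$; the relation consists of all pairs $(s,r)$ with $r$ obtainable this way. Construction of $M$: let $\hat{T}_1$ be the product construction of $T_1$ and the domain automaton of $T_2$ (states written $(q,S)$ with $q\in Q_1$, $S\subseteq Q_2$), and $N$ the product construction of $\hat{T}_1$ and $T_2$ (states written $(q,S,q')$). The states of $M$ are the $(q,S,q')$ with $q'\in S$; its initial state is $(q_1^0,\{q_2^0\},q_2^0)$; its look-ahead automaton is the domain automaton $\hat{A}$ of $\hat{T}_1$. For every rule $(q,S,q')(a(x_1,\dots,x_k))\to\gamma$ of $N$ involving only such states, obtained from the rule $(q,S)(a(x_1,\dots,x_k))\to\xi$ of $\hat{T}_1$ by translating $\xi$ with $q'$, and for all states $l_1,\dots,l_k$ of $\hat{A}$ with $\xi[x_i]\subseteq l_i$ ($i\in[k]$), $M$ has the rule $(q,S,q')(a(x_1\!:\!l_1,\dots,x_k\!:\!l_k))\to\gamma$. *)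

(* Defs.v *)
From mathcomp Require Import all_boot.
From Stdlib Require Import Relations.Relation_Operators.
From Stdlib Require List.

Set Implicit Arguments.
Unset Strict Implicit.
Unset Printing Implicit Defensive.

Inductive tree (F : Type) : Type := Node of F & seq (tree F).
Arguments Node {F}.

Fixpoint tmap (A B : Type) (f : A -> B) (t : tree A) : tree B :=
  let: Node a ts := t in Node (f a) (map (tmap f) ts).

Fixpoint wr (F : Type) (rk : F -> nat) (t : tree F) : bool :=
  let: Node a ts := t in (size ts == rk a) && all (wr rk) ts.

Inductive occurs (F : Type) (x : F) : tree F -> Prop :=
| occ_here ts : occurs x (Node x ts)
| occ_sub y ts u : List.In u ts -> occurs x u -> occurs x (Node y ts).

(* Right-hand sides: trees over D whose leaves may be q(x_i),        *)
(* encoded as the label inr (q, i) (variables x_1..x_k are indexed   *)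
(* 0..k-1 here).                                                      *)
Definition rhs (Q D : Type) := tree (D + Q * nat).

Fixpoint rhs_wf (Q D : Type) (rkD : D -> nat) (k : nat) (t : rhs Q D) : bool :=
  match t with
  | Node (inl d) ts => (size ts == rkD d) && all (rhs_wf rkD k) ts
  | Node (inr (_, i)) ts => (i < k) && nilp ts
  end.

Fixpoint leafy (A B : Type) (t : tree (A + B)) : bool :=
  match t with
  | Node (inl _) ts => all (@leafy A B) ts
  | Node (inr _) ts => nilp ts
  end.

Record tdtt (Q : Type) (L D : Type) := TDTT {
  rule : Q -> L -> rhs Q D -> Prop;   (* rule q(a(x1..xk)) -> t *)
  init : Q }.
Arguments TDTT {Q L D}.

Definition wf_tdtt (Q : Type) (L D : Type) (rkL : L -> nat) (rkD : D -> nat)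
    (T : tdtt Q L D) : Prop :=
  (forall q a t, rule T q a t -> rhs_wf rkD (rkL a) t) /\
  (exists rs : list (Q * L * rhs Q D),
      forall q a t, rule T q a t -> List.In (q, a, t) rs).

(* sentential forms: output symbols, and unevaluated calls q(s)       *)
Definition sform (Q L D : Type) := tree (D + Q * tree L).

Definition call (Q L D : Type) (q : Q) (s : tree L) : sform Q L D :=
  Node (inr (q, s)) [::].
Arguments call {Q L D}.

Fixpoint inst (Q L D : Type) (ss : seq (tree L)) (u : tree L) (t : rhs Q D)
  : sform Q L D :=
  match t with
  | Node (inl d) ts => Node (inl d) (map (inst ss u) ts)
  | Node (inr (q, i)) _ => Node (inr (q, nth u ss i)) [::]
  end.
Arguments inst {Q L D}.

Inductive step (Q L D : Type) (T : tdtt Q L D) : sform Q L D -> sform Q L D -> Prop :=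
| step_rule q a ss t : rule T q a t ->
    step T (call q (Node a ss)) (inst ss (Node a ss) t)
| step_ctx x ts1 u u' ts2 : step T u u' ->
    step T (Node x (ts1 ++ u :: ts2)) (Node x (ts1 ++ u' :: ts2)).

Definition derives (Q L D : Type) (T : tdtt Q L D) (q : Q) (s : tree L)
    (t : tree D) : Prop :=
  clos_refl_trans _ (@step Q L D T) (call q s) (tmap inl t).

Definition tdtt_rel (Q L D : Type) (rkL : L -> nat) (rkD : D -> nat)
    (T : tdtt Q L D) (s : tree L) (t : tree D) : Prop :=
  wr rkL s /\ wr rkD t /\ derives T (init T) s t.

(* T' running on right-hand sides of T: leaves q''(x_i) are symbols   *)
(* with no rules.                                                      *)
Definition ext_tdtt (Q Q' D O : Type) (T' : tdtt Q' D O) : tdtt Q' (D + Q * nat) O :=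
  TDTT (fun p x t => match x with inl d => rule T' p d t | inr _ => False end)
       (init T').
Arguments ext_tdtt {Q Q' D O}.

(* zeta' -> zeta : (q'',p')(x_i) is written back as p'(q''(x_i)) *)
Fixpoint embed (Q Q' D O : Type) (z : rhs (Q * Q') O) : sform Q' (D + Q * nat) O :=
  match z with
  | Node (inl w) ts => Node (inl w) (map (@embed Q Q' D O) ts)
  | Node (inr ((q'', p'), i)) _ => Node (inr (p', Node (inr (q'', i)) [::])) [::]
  end.
Arguments embed {Q Q' D O}.

Definition translates (Q Q' D O : Type) (T' : tdtt Q' D O) (p : Q')
    (xi : rhs Q D) (z : rhs (Q * Q') O) : Prop :=
  leafy z /\
  clos_refl_trans _ (@step Q' (D + Q * nat) O (@ext_tdtt Q Q' D O T'))
    (call p xi) (embed z).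

Definition product (Q Q' L D O : Type) (T : tdtt Q L D) (T' : tdtt Q' D O)
  : tdtt (Q * Q') L O :=
  TDTT (fun qp a z => exists xi, rule T qp.1 a xi /\ translates T' qp.2 xi z)
       (init T, init T').

Definition aut_rhs (P L : Type) (a : L) (dflt : P) (Ss : seq P) : rhs P L :=
  Node (inl a) [seq Node (inr (nth dflt Ss i, i)) [::] | i <- iota 0 (size Ss)].

Definition dom_rule (Q : finType) (L D : Type) (T : tdtt Q L D)
    (S : {set Q}) (a : L) (Ss : seq {set Q}) : Prop :=
  (S = set0 /\ forall i, i < size Ss -> nth set0 Ss i = set0) \/
  (S != set0 /\
   exists Gamma : Q -> rhs Q D -> Prop,
     (forall q, q \in S ->
        (exists xi, Gamma q xi) /\ (forall xi, Gamma q xi -> rule T q a xi)) /\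
     (forall i, i < size Ss -> forall q',
        q' \in nth set0 Ss i <->
        exists q, q \in S /\ exists xi, Gamma q xi /\ occurs (inr (q', i)) xi)).

Definition domA (Q : finType) (L D : Type) (rkL : L -> nat) (T : tdtt Q L D)
  : tdtt {set Q} L L :=
  TDTT (fun S a t => exists Ss : seq {set Q},
          size Ss = rkL a /\ t = aut_rhs a set0 Ss /\ dom_rule T S a Ss)
       [set init T].

Definition accepts (P L : Type) (B : tdtt P L L) (l : P) (s : tree L) : Prop :=
  exists t, derives B l s t.

Record latdtt (Q LB : Type) (L D : Type) := LATDTT {
  la_rule : Q -> L -> seq LB -> rhs Q D -> Prop;
    (* rule q(a(x1:l1,...,xk:lk)) -> t, with [l1;...;lk] *)
  la_init : Q;
  la_aut : tdtt LB L L }.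
Arguments LATDTT {Q LB L D}.

Inductive relab (LB L : Type) (B : tdtt LB L L) : tree L -> tree (L * seq LB) -> Prop :=
| relab_node a ss ls ss' :
    List.Forall2 (accepts B) ls ss -> List.Forall2 (relab B) ss ss' ->
    relab B (Node a ss) (Node (a, ls) ss').

Definition la_tdtt (Q LB L D : Type) (M : latdtt Q LB L D) : tdtt Q (L * seq LB) D :=
  TDTT (fun q al t => la_rule M q al.1 al.2 t) (la_init M).

Definition la_rel (Q LB L D : Type) (rkL : L -> nat) (rkD : D -> nat)
    (M : latdtt Q LB L D) (s : tree L) (r : tree D) : Prop :=
  wr rkL s /\ wr rkD r /\
  exists s', relab (la_aut M) s s' /\ derives (la_tdtt M) (la_init M) s' r.

Section Construction.
Variables (Q1 Q2 : finType) (S D O : Type).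
Variables (rkS : S -> nat) (rkD : D -> nat).
Variables (T1 : tdtt Q1 S D) (T2 : tdtt Q2 D O).

Definition That : tdtt (Q1 * {set Q2}) S D := product T1 (domA rkD T2).

Definition N : tdtt (Q1 * {set Q2} * Q2) S O := product That T2.

Definition MQ := {x : Q1 * {set Q2} * Q2 | x.2 \in x.1.2}.

Definition MQ0 : MQ :=
  exist (fun x : Q1 * {set Q2} * Q2 => x.2 \in x.1.2)
        (init T1, [set init T2], init T2) (set11 (init T2)).

Definition rmap_val (g : rhs MQ O) : rhs (Q1 * {set Q2} * Q2) O :=
  tmap (fun x => match x with inl w => inl w | inr (st, i) => inr (val st, i) end) g.

Definition M_rule (x : MQ) (a : S) (ls : seq {set Q1 * {set Q2}}) (g : rhs MQ O)
  : Prop :=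
  let: (qS, q') := val x in
  size ls = rkS a /\
  exists xi : rhs (Q1 * {set Q2}) D,
    rule That qS a xi /\
    translates T2 q' xi (rmap_val g) /\
    (forall i st, i < size ls -> occurs (inr (st, i)) xi -> st \in nth set0 ls i).

Definition M : latdtt MQ {set Q1 * {set Q2}} S O :=
  LATDTT M_rule MQ0 (domA rkS That).

End Construction.

(* Main.v *)
Require Import Defs.
From mathcomp Require Import all_boot.
From Stdlib Require Import Relations.Relation_Operators Relations.Operators_Properties.
From Stdlib Require List ClassicalEpsilon.
Set Implicit Arguments. Unset Strict Implicit. Unset Printing Implicit Defensive.

Section TreeInd.
Variables (F : Type) (P : tree F -> Prop).
Hypothesis H : forall a ts, (forall x, List.In x ts -> P x) -> P (Node a ts).
Fixpoint tree_ind' (t : tree F) : P t :=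
  let: Node a ts := t in
  @H a ts ((fix G (l : seq (tree F)) : forall x, List.In x l -> P x :=
     match l with
     | [::] => fun x (hx : List.In x [::]) => False_ind _ hx
     | y :: l' => fun x hx => match hx with
                  | or_introl e => eq_ind y P (tree_ind' y) x e
                  | or_intror h => G l' x h end
     end) ts).
End TreeInd.

Lemma In_nth (A : Type) (l : seq A) i x0 : i < size l -> List.In (nth x0 l i) l.
Proof. elim: l i => [|y l IH] [|i] //= H; [by left | right; exact: IH]. Qed.

Lemma nth_In (A : Type) (l : seq A) x : List.In x l -> exists2 i, i < size l & forall x0, x = nth x0 l i.
Proof.
elim: l => [|y l IH] //= [->|/IH [i Hi E]]; first by exists 0.
by exists i.+1.
Qed.

Lemma F2_nth (A B : Type) (P : A -> B -> Prop) l1 l2 :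
  List.Forall2 P l1 l2 <-> size l1 = size l2 /\ forall j d1 d2, j < size l1 -> P (nth d1 l1 j) (nth d2 l2 j).
Proof.
split.
  elim=> [|x y l1' l2' Hxy _ [IHs IH]] //=; split; first by rewrite IHs.
  by move=> [|j] d1 d2 //= Hj; apply: IH.
elim: l1 l2 => [|x l1 IH] [|y l2] [Hs Hn] //; try by constructor.
constructor; first exact: (Hn 0 x y).
apply: IH; split; first by case: Hs.
by move=> j d1 d2 Hj; apply: (Hn j.+1).
Qed.

Lemma choice_seq (A : Type) (P : nat -> A -> Prop) n :
  (forall j, j < n -> exists y, P j y) ->
  exists ys : seq A, size ys = n /\ forall j d, j < n -> P j (nth d ys j).
Proof.
elim: n => [|n IH] H; first by exists [::].
have [ys [Hs Hy]] : exists ys : seq A, size ys = n /\ forall j d, j < n -> P j (nth d ys j).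
  by apply: IH => j Hj; apply: H; exact: ltnW.
have [y Py] := H n (ltnSn n).
exists (rcons ys y); split; first by rewrite size_rcons Hs.
move=> j d Hj; rewrite nth_rcons Hs.
case: ltnP => Hjn; first exact: Hy.
have -> : j = n by apply/eqP; rewrite eqn_leq Hjn -ltnS Hj.
by rewrite eqxx.
Qed.

Lemma all_In (A : Type) (p : pred A) l x : all p l -> List.In x l -> p x.
Proof. elim: l => [|y l IH] //= /andP [Hy Hl] [<-|H] //; exact: IH. Qed.

Definition pb (P : Prop) : bool :=
  if ClassicalEpsilon.excluded_middle_informative P then true else false.
Lemma pbP (P : Prop) : pb P <-> P.
Proof. by rewrite /pb; case: ClassicalEpsilon.excluded_middle_informative. Qed.

Section BD.
Variables (Q L D : Type) (T : tdtt Q L D).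
Inductive bd : sform Q L D -> sform Q L D -> Prop :=
| bd_node x ts ys : List.Forall2 bd ts ys -> bd (Node x ts) (Node x ys)
| bd_call q a ss xi y : rule T q a xi -> bd (inst ss (Node a ss) xi) y -> bd (call q (Node a ss)) y.

Section BDInd.
Variable P : sform Q L D -> sform Q L D -> Prop.
Hypothesis Hn : forall x ts ys, List.Forall2 bd ts ys -> List.Forall2 P ts ys -> P (Node x ts) (Node x ys).
Hypothesis Hc : forall q a ss xi y, rule T q a xi -> bd (inst ss (Node a ss) xi) y ->
  P (inst ss (Node a ss) xi) y -> P (call q (Node a ss)) y.
Fixpoint bd_ind' x y (H : bd x y) {struct H} : P x y :=
  match H with
  | bd_node x ts ys HF => Hn x HF
     ((fix G ts ys (HF : List.Forall2 bd ts ys) : List.Forall2 P ts ys :=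
        match HF with
        | List.Forall2_nil => List.Forall2_nil _
        | List.Forall2_cons t y ts ys Hty HF' => List.Forall2_cons _ _ (bd_ind' Hty) (G _ _ HF')
        end) ts ys HF)
  | bd_call q a ss xi y Hr Hb => Hc Hr Hb (bd_ind' Hb)
  end.
End BDInd.

Lemma bd_refl x : bd x x.
Proof.
elim/tree_ind': x => a ts IH; constructor.
elim: ts IH => [|t ts IHl] IH; constructor; first by apply: IH; left.
by apply: IHl => x Hx; apply: IH; right.
Qed.

Lemma bd_step x y z : step T x y -> bd y z -> bd x z.
Proof.
move=> H; elim: H z => [q a ss t Hr|x0 ts1 u u' ts2 Hs IH] z Hz.
  exact: bd_call Hr Hz.
inversion Hz as [x1 ts0 ys HF E1 E2|]; subst.
  move/F2_nth: HF => [Hsz Hn].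
  constructor; apply/F2_nth; split; first by move: Hsz; rewrite !size_cat.
  move=> j d1 d2 Hj.
  have Hj' : j < size (ts1 ++ u' :: ts2) by move: Hj; rewrite !size_cat.
  have := Hn j d1 d2 Hj'; rewrite !nth_cat; case: ifP => // _.
  case: (j - size ts1) => [|k] //=; exact: IH.
by destruct ts1.
Qed.

Lemma rt_bd x y : clos_refl_trans _ (step T) x y -> bd x y.
Proof.
move=> H; apply clos_rt_rt1n in H; elim: H => [x0|x0 y0 z0 Hs _ IH]; first exact: bd_refl.
exact: bd_step Hs IH.
Qed.

Lemma rt_ctx x ts1 u u' ts2 : clos_refl_trans _ (step T) u u' ->
  clos_refl_trans _ (step T) (Node x (ts1 ++ u :: ts2)) (Node x (ts1 ++ u' :: ts2)).
Proof.
elim=> [a b H|a|a b c _ H1 _ H2]; first by apply: rt_step; constructor.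
  exact: rt_refl.
exact: rt_trans H1 H2.
Qed.

Lemma bd_rt x y : bd x y -> clos_refl_trans _ (step T) x y.
Proof.
elim/bd_ind': x y / => [x ts ys _ HF|q a ss xi y Hr _ IH].
  suff H : forall pre, clos_refl_trans _ (step T) (Node x (pre ++ ts)) (Node x (pre ++ ys)).
    exact: (H [::]).
  elim: HF => [|t y0 ts0 ys0 Hty _ IH] pre; first exact: rt_refl.
  apply: rt_trans (rt_ctx x pre ts0 Hty) _.
  by have := IH (rcons pre y0); rewrite -!cats1 -!catA.
apply: rt_trans IH; apply: rt_step; exact: step_rule.
Qed.

Lemma bd_callI q s y : bd (call q s) y ->
  y = call q s \/ exists a ss xi, s = Node a ss /\ rule T q a xi /\ bd (inst ss (Node a ss) xi) y.
Proof.
move=> H; inversion H as [x ts ys HF E1 E2|]; subst.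
  left; inversion HF; subst; done.
right; by exists a, ss, xi.
Qed.

Lemma bd_inlI d ts y : bd (Node (inl d) ts) y ->
  exists ys, y = Node (inl d) ys /\ List.Forall2 bd ts ys.
Proof. move=> H; inversion H; subst; by [exists ys|]. Qed.

Lemma bd_call_out q s (t : tree D) : bd (call q s) (tmap inl t) ->
  exists a ss xi, s = Node a ss /\ rule T q a xi /\ bd (inst ss (Node a ss) xi) (tmap inl t).
Proof. by case/bd_callI => //; case: t. Qed.

End BD.

Lemma tmap_inlI (A B : Type) (t : tree A) d ys :
  tmap (@inl A B) t = Node (inl d) ys -> exists ts, t = Node d ts /\ ys = map (tmap inl) ts.
Proof. case: t => a ts /= [-> <-]; by exists ts. Qed.

Lemma subrun (Q L D : Type) (T : tdtt Q L D) (xi : rhs Q D) q j ts w (u : tree D) :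
  occurs (inr (q, j)) xi -> leafy xi -> bd T (inst ts w xi) (tmap inl u) ->
  exists u', bd T (call q (nth w ts j)) (tmap inl u').
Proof.
move=> H; elim: H u => [ch|y ch x0 HIn Hocc IH] u.
  by move=> _ /= Hb; exists u.
case: y => [o|[q3 i3]] /=.
  move=> Hl Hb; have [ys [E HF]] := bd_inlI Hb.
  have [us [Eu Eys]] := tmap_inlI E; subst.
  have HIn' : List.In (inst ts w x0) (map (inst ts w) ch) by apply: List.in_map.
  move/F2_nth: HF => [Hsz Hn].
  have [i Hi Ei] := nth_In HIn'.
  have := Hn i (inst ts w x0) (tmap inl (Node o us)) Hi; rewrite -Ei.
  rewrite !size_map in Hi Hsz.
  rewrite (nth_map (Node o us)); last by rewrite -Hsz.
  apply: IH; exact: all_In Hl HIn.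
by move=> /nilP E; rewrite E in HIn.
Qed.

Lemma In_all (A : Type) (p : pred A) l : (forall x, List.In x l -> p x) -> all p l.
Proof. elim: l => [|y l IH] //= H; rewrite H /=; [apply: IH => x Hx; apply: H; by right | by left]. Qed.

Lemma rhs_wf_leafy (Q D : Type) (rk : D -> nat) k (xi : rhs Q D) : rhs_wf rk k xi -> leafy xi.
Proof.
elim/tree_ind': xi => [[d|[q i]] ts IH] /=.
  case/andP=> _ H; apply: In_all => x Hx; apply: IH => //; exact: all_In H Hx.
by case/andP.
Qed.

Lemma occurs_bound (Q D : Type) (rk : D -> nat) k (xi : rhs Q D) q i :
  occurs (inr (q, i)) xi -> rhs_wf rk k xi -> i < k.
Proof.
elim=> [ts|[d|[q3 i3]] ts x HIn _ IH] /=; first by case/andP.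
  case/andP=> _ H; apply: IH; exact: all_In H HIn.
by case/andP => _ /nilP E; rewrite E in HIn.
Qed.

Lemma inst_aut (P L D : Type) (ts : seq (tree L)) u (d : D) (Ss : seq P) dflt :
  inst ts u (aut_rhs d dflt Ss) =
  Node (inl d) (map (fun j => call (nth dflt Ss j) (nth u ts j)) (iota 0 (size Ss))).
Proof. by rewrite /aut_rhs /= -map_comp. Qed.

Lemma nth_map_iota (A : Type) (f : nat -> A) n j d : j < n -> nth d (map f (iota 0 n)) j = f j.
Proof. move=> Hj; rewrite (nth_map 0); last by rewrite size_iota. by rewrite nth_iota. Qed.

Section Main.
Variables (Q1 Q2 Sg Dl Om : finType) (rkS : Sg -> nat) (rkD : Dl -> nat) (rkO : Om -> nat)
  (T1 : tdtt Q1 Sg Dl) (T2 : tdtt Q2 Dl Om).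
Hypothesis wf1 : forall q a t, rule T1 q a t -> rhs_wf rkD (rkS a) t.
Hypothesis wf2 : forall q a t, rule T2 q a t -> rhs_wf rkO (rkD a) t.

Local Notation TH := (That rkD T1 T2).
Local Notation MM := (M rkS rkD T1 T2).
Local Notation MT := (la_tdtt MM).
Local Notation DA := (domA rkD T2).
Local Notation LA := (domA rkS TH).
Local Notation ST := (Q1 * {set Q2})%type.

Definition domset (w : tree Sg) : {set ST} :=
  [set st | pb (exists out : tree Dl, bd TH (call st w) (tmap inl out))].
Fixpoint relabel (w : tree Sg) : tree (Sg * seq {set ST}) :=
  let: Node a ws := w in Node (a, map domset ws) (map relabel ws).

Lemma That_leafy st a xi : rule TH st a xi -> leafy xi.
Proof. by case=> xi1 [_ [Hl _]]. Qed.

Lemma accept_lem w : wr rkS w -> forall l : {set ST},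
  (forall st, st \in l -> exists out, bd TH (call st w) (tmap inl out)) ->
  exists y : tree Sg, bd LA (call l w) (tmap inl y).
Proof.
elim/tree_ind': w => a ws IH /= /andP [/eqP Hsz Hwr] l Hl.
pose Gam := fun st xi => rule TH st a xi /\ exists out, bd TH (inst ws (Node a ws) xi) (tmap inl out).
pose Ss := map (fun j => [set st'' | pb (exists st, st \in l /\ exists xi, Gam st xi /\ occurs (inr (st'', j)) xi)]) (iota 0 (size ws)).
have HSs : forall j, j < size ws -> forall st'', st'' \in nth set0 Ss j <->
    exists st, st \in l /\ exists xi, Gam st xi /\ occurs (inr (st'', j)) xi.
  by move=> j Hj st''; rewrite nth_map_iota // inE pbP.
have Hch : forall j, j < size ws -> exists y, bd LA (call (nth set0 Ss j) (nth (Node a ws) ws j)) (tmap inl y).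
  move=> j Hj; apply: IH; first exact: In_nth.
    exact: all_In Hwr (In_nth _ Hj).
  move=> st'' /(HSs j Hj) [st [Hst [xi [[Hr [out Hb]] Ho]]]].
  exact: subrun Ho (That_leafy Hr) Hb.
have [ys [Hys Hy]] := choice_seq Hch.
exists (Node a ys).
have HsS : size Ss = size ws by rewrite size_map size_iota.

have HH := @bd_call _ _ _ LA l a ws (aut_rhs a set0 Ss).
apply: HH.
  exists Ss; split; first by rewrite HsS.
  split => //.
  case: (eqVneq l set0) => [El|Hne].
    left; split => // j Hj; apply/setP => st''; rewrite in_set0; apply/negbTE/negP.
    rewrite HsS in Hj; move/(HSs j Hj) => [st [Hst _]]; by rewrite El in_set0 in Hst.
  right; split => //; exists Gam; split.
    move=> q Hq; have [out Hb] := Hl q Hq.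
    have [a' [ss' [xi [E [Hr Hb']]]]] := bd_call_out Hb.
    case: E => E1 E2; subst a' ss'.
    split; first by exists xi; split => //; exists out.
    by move=> xi0 [].
  move=> i Hi q'; rewrite HsS in Hi; exact: HSs.
rewrite inst_aut /=; apply: bd_node; apply/F2_nth; split.
  by rewrite !size_map !size_iota ?HsS Hys.
rewrite size_map !size_iota ?HsS.
move=> j d1 d2 Hj; rewrite nth_map_iota ?HsS // (nth_map (Node a ws)) ?Hys //.
exact: Hy.
Qed.

Lemma relab_ok w : wr rkS w -> relab LA w (relabel w).
Proof.
elim/tree_ind': w => a ws IH /= /andP [/eqP Hsz Hwr].
constructor.
  apply/F2_nth; rewrite size_map; split => // j d1 d2 Hj.
  rewrite (nth_map (Node a ws)) // (set_nth_default (Node a ws)) //.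
  have Hw : wr rkS (nth (Node a ws) ws j) by exact: all_In Hwr (In_nth _ Hj).
  have [y Hy] : exists y, bd LA (call (domset (nth (Node a ws) ws j)) (nth (Node a ws) ws j)) (tmap inl y).
    apply: (accept_lem Hw) => st. by rewrite inE pbP.
  by exists y; apply: bd_rt.
apply/F2_nth; rewrite size_map; split => // j d1 d2 Hj.
rewrite (nth_map (Node a ws)) // (set_nth_default (Node a ws)) //.
apply: IH; first exact: In_nth.
exact: all_In Hwr (In_nth _ Hj).
Qed.


Lemma all_nthI (A : Type) (p : pred A) (s : seq A) x0 :
  (forall i, i < size s -> p (nth x0 s i)) -> all p s.
Proof. by move=> H; apply/(all_nthP x0). Qed.

Lemma xi_lem ts (w : tree Dl) (xis : seq (rhs ST Dl)) wx (cs : seq (tree (Sg * seq {set ST}))) c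
  (xi2 : rhs Q2 Om) : forall u : tree Om,
  bd T2 (inst ts w xi2) (tmap inl u) ->
  (forall p' j u', occurs (inr (p', j)) xi2 -> bd T2 (call p' (nth w ts j)) (tmap inl u') ->
     exists g' : rhs (MQ Q1 Q2) Om, leafy (rmap_val g') /\
       bd (ext_tdtt T2) (call p' (nth wx xis j)) (embed (rmap_val g')) /\
       bd MT (inst cs c g') (tmap inl u')) ->
  exists g : rhs (MQ Q1 Q2) Om, leafy (rmap_val g) /\
    bd (ext_tdtt T2) (inst xis wx xi2) (embed (rmap_val g)) /\
    bd MT (inst cs c g) (tmap inl u).
Proof.
elim/tree_ind': xi2 => [[o|[p' j]] ch IH] u /= Hb Hh; last first.
  exact: Hh (occ_here _ _) Hb.
have [ys [E HF]] := bd_inlI Hb.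
have [us [Eu Eys]] := tmap_inlI E; subst.
move/F2_nth: HF; rewrite !size_map => [[Hsz Hn]].
have Hk : forall k, k < size ch -> exists g : rhs (MQ Q1 Q2) Om, leafy (rmap_val g) /\
    bd (ext_tdtt T2) (inst xis wx (nth (Node (inl o) ch) ch k)) (embed (rmap_val g)) /\
    bd MT (inst cs c g) (tmap inl (nth (Node o us) us k)).
  move=> k Hk; apply: IH; first exact: In_nth.
    have := Hn k (inst ts w (Node (inl o) ch)) (tmap inl (Node o us)).
    rewrite (nth_map (Node (inl o) ch)) // (nth_map (Node o us)) -?Hsz //.
    by apply.
  move=> p'' j u' Ho; apply: Hh; apply: occ_sub Ho; exact: In_nth.
have [gs [Hgs Hg]] := choice_seq Hk.
exists (Node (inl o) gs); split; last split.
- rewrite /rmap_val /=; apply: (all_nthI (x0 := tmap inl (Node o us))) => i; rewrite size_map => Hi.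
  rewrite (nth_map (Node (inl o) gs)) //; rewrite Hgs in Hi.
  by case: (Hg i (Node (inl o) gs) Hi).
- rewrite /rmap_val /=; apply: bd_node; apply/F2_nth; rewrite !size_map Hgs; split => //.
  move=> i d1 d2 Hi; rewrite (nth_map (Node (inl o) ch)) // (nth_map (tmap (fun x => match x with inl w => inl w | inr (st, i) => inr (val st, i) end) (Node (inl o) gs))) ?size_map ?Hgs //.
  rewrite (nth_map (Node (inl o) gs)) ?Hgs //.
  by case: (Hg i (Node (inl o) gs) Hi) => _ [].
- apply: bd_node; apply/F2_nth; rewrite !size_map Hgs; split => //.
  move=> i d1 d2 Hi; rewrite (nth_map (Node (inl o) gs)) ?Hgs // (nth_map (Node o us)) -?Hsz //.
  by case: (Hg i (Node (inl o) gs) Hi) => _ [].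
Qed.


Definition setOf (L : Q2 -> tree Om -> Prop) : {set Q2} := [set p | pb (exists u, L p u)].

Definition MainP (s : tree Sg) : Prop :=
  wr rkS s -> forall q (t : tree Dl), wr rkD t ->
  (exists S0 : {set Q2}, bd TH (call (q, S0) s) (tmap inl t)) ->
  forall L : Q2 -> tree Om -> Prop, (forall p u, L p u -> bd T2 (call p t) (tmap inl u)) ->
  bd TH (call (q, setOf L) s) (tmap inl t) /\
  (forall (x : MQ Q1 Q2) p u, val x = (q, setOf L, p) -> L p u ->
     bd MT (call x (relabel s)) (tmap inl u)).

Lemma occurs_nil (F : Type) (x y : F) : occurs x (Node y [::]) -> x = y.
Proof. by move=> H; inversion H. Qed.

Lemma occurs_inlI (A B : Type) (z : B) (d : A) xs :
  occurs (inr z) (Node (inl d) xs) -> exists2 x, List.In x xs & occurs (inr z) x.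
Proof. move=> H; inversion H; subst; by exists u. Qed.

Lemma rhs_lem a ss (Hwrs : wr rkS (Node a ss))
  (IHs : forall i, i < size ss -> MainP (nth (Node a ss) ss i)) (xi1 : rhs Q1 Dl) :
  rhs_wf rkD (rkS a) xi1 -> forall t : tree Dl, wr rkD t ->
  forall (S0 : {set Q2}) (xi0 : rhs ST Dl), leafy xi0 ->
  bd (ext_tdtt DA) (call S0 xi1) (embed xi0) ->
  bd TH (inst ss (Node a ss) xi0) (tmap inl t) ->
  forall L : Q2 -> tree Om -> Prop, (forall p u, L p u -> bd T2 (call p t) (tmap inl u)) ->
  exists xi : rhs ST Dl, leafy xi /\ bd (ext_tdtt DA) (call (setOf L) xi1) (embed xi) /\
    bd TH (inst ss (Node a ss) xi) (tmap inl t) /\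
    (forall st i, occurs (inr (st, i)) xi ->
       exists out, bd TH (call st (nth (Node a ss) ss i)) (tmap inl out)) /\
    (forall p u, L p u -> exists g : rhs (MQ Q1 Q2) Om, leafy (rmap_val g) /\
       bd (ext_tdtt T2) (call p xi) (embed (rmap_val g)) /\
       bd MT (inst (map relabel ss) (relabel (Node a ss)) g) (tmap inl u)).
Proof.
move: Hwrs => /= /andP [/eqP Hssz Hwrss].
elim/tree_ind': xi1 => [[d|[q'' i]] ts1 IH] Hwf t Hwt S0 xi0 Hlf0 Htr0 Hth0 L HL; last first.
  move/andP: Hwf => [Hi /nilP Ets]; subst ts1.
  case: (bd_callI Htr0) => [E|[a' [ss' [xi' [E [Hr _]]]]]]; last first.
    by case: E => Ea Ess; subst.
  clear Htr0; case: xi0 Hlf0 E Hth0 => [[w|[[q3 p3] i3]] ch0] //= _ [E1 E2 E3] Hth0; subst.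
  have Hisz : i < size ss by rewrite Hssz.
  have [HA HB] := IHs i Hisz (all_In Hwrss (In_nth _ Hisz)) q'' t Hwt (ex_intro _ S0 Hth0) L HL.
  exists (Node (inr ((q'', setOf L), i)) [::]); split; first by [].
  split; first exact: bd_refl.
  split; first exact: HA.
  split.
    move=> st i' Ho; have := occurs_nil Ho; case=> -> ->; by exists t.
  move=> p u HLpu.
  have Hp : p \in setOf L by rewrite inE pbP; exists u.
  pose x : MQ Q1 Q2 := exist _ (q'', setOf L, p) Hp.
  exists (Node (inr (x, i)) [::]); split; first by [].
  split; first exact: bd_refl.
  change (bd MT (call x (nth (relabel (Node a ss)) (map relabel ss) i)) (tmap inl u)).
  rewrite (nth_map (Node a ss)) //.
  exact: HB x p u erefl HLpu.
move: Hwf => /= /andP [/eqP Hts1 Hwf1].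
case: (bd_callI Htr0) => [E|[a' [ss' [xi' [E [Hr Hb]]]]]].
  by exfalso; clear Htr0; destruct xi0 as [[w|[[q3 p3] i3]] ch0]; simpl in E; [discriminate | injection E => _ E2; discriminate].
case: E => Ea Ess; subst a' ss'.
case: Hr => Ss0 [HsS0 [Exi' _]]; subst xi'.
rewrite inst_aut in Hb.
have [ys [E HF]] := bd_inlI Hb.
clear Htr0 Hb.
case: xi0 Hlf0 E Hth0 => [[w|[[q3 p3] i3]] xis0] //= Hlf0 [Ew Eys] Hth0; subst w ys.
move/F2_nth: HF; rewrite !size_map size_iota => [[HszX HtrX]].
have [ys' [E' HF']] := bd_inlI Hth0.
have [ts [Et Eys']] := tmap_inlI E'; subst t ys'.
move/F2_nth: HF'; rewrite !size_map => [[HszT HthX]].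
move: Hwt => /= /andP [/eqP Hts Hwts].
have Hn1 : size xis0 = size ts1 by rewrite -HszX HsS0.
have Hn2 : size ts = size ts1 by rewrite Hts.
pose Gam := fun p xi2 => exists u, L p u /\ rule T2 p d xi2 /\ bd T2 (inst ts (Node d ts) xi2) (tmap inl u).
pose Lj := fun j p' u' => (exists p xi2, Gam p xi2 /\ occurs (inr (p', j)) xi2) /\ bd T2 (call p' (nth (Node d ts) ts j)) (tmap inl u').
have HLinv : forall p u, L p u -> exists xi2, rule T2 p d xi2 /\
  bd T2 (inst ts (Node d ts) xi2) (tmap inl u).
  move=> p u HLpu; have [a' [ss' [xi2 [E [Hr Hb]]]]] := bd_call_out (HL p u HLpu).
  by case: E => Ea Ess; subst; exists xi2.
have Hch : forall j, j < size ts1 -> exists xi : rhs ST Dl,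
    leafy xi /\ bd (ext_tdtt DA) (call (setOf (Lj j)) (nth (Node (inl d) ts1) ts1 j)) (embed xi) /\
  bd TH (inst ss (Node a ss) xi) (tmap inl (nth (Node d ts) ts j)) /\
  (forall st i, occurs (inr (st, i)) xi ->
       exists out, bd TH (call st (nth (Node a ss) ss i)) (tmap inl out)) /\
  (forall p u, Lj j p u -> exists g : rhs (MQ Q1 Q2) Om, leafy (rmap_val g) /\
  bd (ext_tdtt T2) (call p xi) (embed (rmap_val g)) /\
  bd MT (inst (map relabel ss) (relabel (Node a ss)) g) (tmap inl u)).
  move=> j Hj.
  apply: (IH _ (In_nth _ Hj) (all_In Hwf1 (In_nth _ Hj)) _ _ (nth set0 Ss0 j) (nth (Node (inl d) xis0) xis0 j)).
  all: try (by move=> p u []).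
  - by apply: all_In Hwts (In_nth _ _); rewrite Hn2.
  - by apply: all_In Hlf0 (In_nth _ _); rewrite Hn1.
  - have := HtrX j (Node (inl d) [::]) (embed (Node (inl d) xis0)).
    have Hj0 : j < size Ss0 by rewrite HsS0 -Hts1.
    move/(_ Hj0); rewrite nth_map_iota // (nth_map (Node (inl d) xis0)) // -HszX //.
  - have := HthX j (inst ss (Node a ss) (Node (inl d) xis0)) (tmap inl (Node d ts)).
    have Hjx : j < size xis0 by rewrite Hn1.
    have Hjt : j < size ts by rewrite Hn2.
    by move/(_ Hjx); rewrite (nth_map (Node (inl d) xis0)) // (nth_map (Node d ts)).
have [xis [Hxs Hx]] := choice_seq Hch.
pose Ss := map (fun j => setOf (Lj j)) (iota 0 (size ts1)).
have HSs : forall j, j < size ts1 -> nth set0 Ss j = setOf (Lj j).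
  by move=> j Hj; rewrite nth_map_iota.
have HsS : size Ss = size ts1 by rewrite size_map size_iota.
exists (Node (inl d) xis); split; last split; last split; last split.
- apply: (all_nthI (x0 := Node (inl d) xis)) => j; rewrite Hxs => Hj.
  by case: (Hx j (Node (inl d) xis) Hj).
- have Hr : rule (@ext_tdtt Q1 _ _ _ DA) (setOf L) (inl d) (aut_rhs d set0 Ss).
    exists Ss; split; first by rewrite HsS.
    split => //.
    case: (eqVneq (setOf L) set0) => [E0|Hne].
      left; split => // j Hj; rewrite HsS in Hj; rewrite HSs //.
      apply/setP => p'; rewrite in_set0 inE; apply/negbTE/negP; rewrite pbP.
      move=> [u' [[p [xi2 [[u [HLp _]] _]]] _]].
      have : p \in setOf L by rewrite inE pbP; exists u.
      by rewrite E0 in_set0.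
    right; split => //; exists Gam; split.
      move=> p; rewrite inE pbP => [[u HLp]]; have [xi2 [Hr Hb]] := HLinv p u HLp.
      split; first by exists xi2, u.
      by move=> xi2' [u' [_ [Hr' _]]].
    move=> j Hj p'; rewrite HsS in Hj; rewrite HSs // inE pbP; split.
      move=> [u' [[p [xi2 [HG Ho]]] _]]; exists p; split; last by exists xi2.
      by case: HG => u [HLp _]; rewrite inE pbP; exists u.
    move=> [p [_ [xi2 [HG Ho]]]].
    case: (HG) => u [HLp [Hr Hb]].
    have [u' Hu'] := subrun Ho (rhs_wf_leafy (wf2 Hr)) Hb.
    by exists u'; split => //; exists p, xi2.
  have HH := @bd_call _ _ _ (@ext_tdtt Q1 _ _ _ DA) (setOf L) (inl d) ts1 (aut_rhs d set0 Ss) (embed (Node (inl d) xis)) Hr.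
  apply: HH.
  rewrite inst_aut; apply: bd_node; apply/F2_nth; split.
    by rewrite !size_map !size_iota ?HsS Hxs.
  rewrite size_map !size_iota ?HsS => j d1 d2 Hj.
  have Hj' : j < size Ss by rewrite HsS.
  rewrite (nth_map_iota _ _ Hj) (nth_map (Node (inl d) xis)) ?Hxs // HSs //.
  by case: (Hx j (Node (inl d) xis) Hj) => _ [].
- rewrite /=; apply: bd_node; apply/F2_nth; split.
    by rewrite !size_map Hxs Hn2.
  rewrite size_map Hxs => j d1 d2 Hj.
  rewrite (nth_map (Node (inl d) xis)) ?Hxs // (nth_map (Node d ts)) ?Hn2 //.
  by case: (Hx j (Node (inl d) xis) Hj) => _ [_ []].
- move=> st i Ho; have [x Hin Hox] := occurs_inlI Ho.
  have [j Hj Ej] := nth_In Hin; rewrite (Ej (Node (inl d) xis)) in Hox.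
  rewrite Hxs in Hj.
  by case: (Hx j (Node (inl d) xis) Hj) => _ [_ [_ [Hoc _]]]; apply: Hoc Hox.
move=> p u HLp; have [xi2 [Hr Hb]] := HLinv p u HLp.
have Hh : forall p' j u', occurs (inr (p', j)) xi2 -> bd T2 (call p' (nth (Node d ts) ts j)) (tmap inl u') ->
     exists g' : rhs (MQ Q1 Q2) Om, leafy (rmap_val g') /\
       bd (ext_tdtt T2) (call p' (nth (Node (inl d) xis) xis j)) (embed (rmap_val g')) /\
       bd MT (inst (map relabel ss) (relabel (Node a ss)) g') (tmap inl u').
  move=> p' j u' Ho Hb'.
  have Hj : j < size ts1 by rewrite Hts1; exact: occurs_bound Ho (wf2 Hr).
  case: (Hx j (Node (inl d) xis) Hj) => _ [_ [_ [_ HM]]]; apply: HM.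
  by split => //; exists p, xi2; split => //; exists u.
have [g [Hg1 [Hg2 Hg3]]] := xi_lem Hb Hh.
exists g; split => //; split => //.
have HH := @bd_call _ _ _ (@ext_tdtt ST _ _ _ T2) p (inl d) xis xi2 (embed (rmap_val g)) Hr.
exact: HH.
Qed.


Lemma main_lem s : MainP s.
Proof.
elim/tree_ind': s => a ss IH Hwr q t Hwt [S0 Hb0] L HL.
have [a' [ss' [xi0 [E [Hr Hb]]]]] := bd_call_out Hb0.
case: E => E1 E2; subst a' ss'.
case: Hr => xi1 [Hr1 [Hlf0 Hrt0]].
have Htr0 := rt_bd Hrt0.
have IHs : forall i, i < size ss -> MainP (nth (Node a ss) ss i).
  move=> i Hi; apply: IH; exact: In_nth.
have [xi [Hlf [Htr [Hth [Hocc HM]]]]] :=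
  rhs_lem Hwr IHs (wf1 Hr1) Hwt Hlf0 Htr0 Hb HL.
have HrT : rule TH (q, setOf L) a xi.
  by exists xi1; split => //; split => //; apply: bd_rt.
split.
  have HH := @bd_call _ _ _ TH (q, setOf L) a ss xi (tmap inl t) HrT.
  exact: HH.
move=> x p u Ex HLp.
have [g [Hg1 [Hg2 Hg3]]] := HM p u HLp.
have HrM : rule MT x (a, map domset ss) g.
  rewrite /= /M_rule Ex; split; first by rewrite size_map; move: Hwr => /= /andP [/eqP].
  exists xi; split => //; split; first by split => //; apply: bd_rt.
  move=> i st Hi Ho; rewrite size_map in Hi.
  rewrite (nth_map (Node a ss)) // inE pbP; exact: Hocc Ho.
have HH := @bd_call _ _ _ MT x (a, map domset ss) (map relabel ss) g (tmap inl u) HrM.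
exact: HH.
Qed.

End Main.

Theorem lemma4 (Q1 Q2 Sigma Delta Omega : finType)
    (rkS : Sigma -> nat) (rkD : Delta -> nat) (rkO : Omega -> nat)
    (T1 : tdtt Q1 Sigma Delta) (T2 : tdtt Q2 Delta Omega) :
  wf_tdtt rkS rkD T1 -> wf_tdtt rkD rkO T2 ->
  forall (s : tree Sigma) (u : tree Omega),
    (exists t : tree Delta,
        tdtt_rel rkS rkD (That rkD T1 T2) s t /\ tdtt_rel rkD rkO T2 t u) ->
    la_rel rkS rkO (M rkS rkD T1 T2) s u.
Proof.
move=> [wf1 _] [wf2 _] s u [t [[Hws [Hwt Hd1]] [_ [Hwu Hd2]]]].
split => //; split => //.
exists (relabel rkD T1 T2 s); split; first exact: relab_ok.
pose L := fun p (u' : tree Omega) => p = init T2 /\ u' = u.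
have HL : forall p u', L p u' -> bd T2 (call p t) (tmap inl u').
  by move=> p u' [-> ->]; exact: rt_bd Hd2.
have H0 : exists S0 : {set Q2}, bd (That rkD T1 T2) (call (init T1, S0) s) (tmap inl t).
  by exists [set init T2]; exact: rt_bd Hd1.
have [_ HM] := main_lem wf1 wf2 Hws Hwt H0 HL.
have ES : setOf L = [set init T2].
  apply/setP => p; rewrite in_set1; apply/idP/eqP.
    by rewrite inE => /pbP [u' [-> _]].
  by move=> ->; rewrite inE; apply/pbP; exists u; split.
apply: bd_rt.
apply: (HM (MQ0 T1 T2) (init T2) u); last by split.
by rewrite ES.
Qed.
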